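(* Let $V$ be a quasi-regular mixed lattice vector space and let $\mathcal{R}(V)$ be the set of all regular quasi-ideals of $V$, ordered by inclusion. Then $\mathcal{R}(V)$ is a distributive lattice in which $A\vee B=A+B$ and $A\wedge B=A\cap B$. Moreover, $\mathcal{R}(V)$ has smallest element $\{0\}$ and largest element $V_{sp}-V_{sp}$.
   Context: A mixed lattice vector space is a real vector space $V$ with two partial orderings $\le$ (initial) and $\preceq$ (specific), each compatible with the vector space structure, such that for all $x,y$ the mixed lower envelope $x\curlywedge y=\max\{w: w\preceq x,\ w\le y\}$ and mixed upper envelope $x\curlyvee y=\min\{w: x\preceq w,\ y\le w\}$ exist (max/min with respect to $\le$). $V_{sp}=\{x:0\preceq x\}$, $E_{sp}=E\cap V_{sp}$. $V$ is quasi-regular if $V_{sp}$ is closed under $\curlywedge,\curlyvee$. A mixed lattice subspace is a linear subspace closed under $\curlywedge,\curlyvee$. A subspace $S$ is regular if $S=S_{sp}-S_{sp}$. A quasi-ideal is a mixed lattice subspace $A$ such that $y\in A$ and $0\preceq x\le y$ imply $x\in A$. *)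

(* Defs.v *)
From HB Require Import structures.
From mathcomp Require Import all_boot all_order all_algebra.
From mathcomp Require Import reals.
Set Implicit Arguments. Unset Strict Implicit. Unset Printing Implicit Defensive.
Import Order.TTheory GRing.Theory Num.Theory.
Local Open Scope ring_scope.

Section MixedLattice.
Variables (R : realType) (V : lmodType R).

Definition ordered_vs (le : V -> V -> Prop) : Prop :=
  [/\ (forall x, le x x),
      (forall x y, le x y -> le y x -> x = y),
      (forall x y z, le x y -> le y z -> le x z),
      (forall x y z, le x y -> le (x + z) (y + z)) &
      (forall (a : R) x y, 0 <= a -> le x y -> le (a *: x) (a *: y))].

Definition is_mlower (le sle : V -> V -> Prop) (x y w : V) : Prop :=
  [/\ sle w x, le w y & forall z, sle z x -> le z y -> le z w].

Definition is_mupper (le sle : V -> V -> Prop) (x y w : V) : Prop :=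
  [/\ sle x w, le y w & forall z, sle x z -> le y z -> le w z].

Record mixed_lattice_vs := MixedLatticeVS {
  ile : V -> V -> Prop;   (* initial order  <= *)
  sle : V -> V -> Prop;   (* specific order ⪯  *)
  ile_ordered : ordered_vs ile;
  sle_ordered : ordered_vs sle;
  mlower_ex : forall x y, exists w, is_mlower ile sle x y w;
  mupper_ex : forall x y, exists w, is_mupper ile sle x y w
}.

Variable M : mixed_lattice_vs.

Definition Vsp (x : V) : Prop := sle M 0 x.

Definition mclosed (S : V -> Prop) : Prop :=
  (forall x y w, S x -> S y -> is_mlower (ile M) (sle M) x y w -> S w) /\
  (forall x y w, S x -> S y -> is_mupper (ile M) (sle M) x y w -> S w).

Definition quasi_regular : Prop := mclosed Vsp.

Definition linear_subspace (S : V -> Prop) : Prop :=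
  [/\ S 0, (forall x y, S x -> S y -> S (x + y)) &
      (forall (a : R) x, S x -> S (a *: x))].

Definition mixed_lattice_subspace (S : V -> Prop) : Prop :=
  linear_subspace S /\ mclosed S.

Definition regular (S : V -> Prop) : Prop :=
  forall x, S x <-> exists a b, [/\ S a, Vsp a, S b, Vsp b & x = a - b].

Definition quasi_ideal (A : V -> Prop) : Prop :=
  mixed_lattice_subspace A /\
  (forall x y, A y -> sle M 0 x -> ile M x y -> A x).

Definition regular_quasi_ideal (A : V -> Prop) : Prop :=
  quasi_ideal A /\ regular A.

End MixedLattice.

Definition set_incl {V : Type} (A B : V -> Prop) : Prop := forall x, A x -> B x.
Definition set_eq {V : Type} (A B : V -> Prop) : Prop := forall x, A x <-> B x.
Definition set_cap {V : Type} (A B : V -> Prop) : V -> Prop := fun x => A x /\ B x.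
Definition set_sum {R : pzRingType} {V : lmodType R} (A B : V -> Prop) : V -> Prop :=
  fun x => exists a b, [/\ A a, B b & x = (a + b)%R].
Definition set_zero {R : pzRingType} {V : lmodType R} : V -> Prop := fun x => x = 0%R.
Definition Vsp_diff (R : realType) (V : lmodType R) (M : mixed_lattice_vs V) : V -> Prop :=
  fun x => exists a b, [/\ Vsp M a, Vsp M b & x = (a - b)%R].

(* Main.v *)
Require Import Defs.
From mathcomp Require Import all_boot all_order all_algebra.
From mathcomp Require Import reals.
Set Implicit Arguments. Unset Strict Implicit. Unset Printing Implicit Defensive.
Import Order.TTheory GRing.Theory Num.Theory.
Local Open Scope ring_scope.

Lemma ord_props (R : realType) (V : lmodType R) (le : V -> V -> Prop) :
  ordered_vs le ->
  [/\ (forall x, le x x), (forall x y, le x y -> le y x -> x = y),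
      (forall x y z, le x y -> le y z -> le x z),
      (forall x y z, le x y -> le (x + z) (y + z)) &
      (forall x y, le x y -> forall c, le (c - y) (c - x))].
Proof.
case=> r a t ad sc; split=> //.
move=> x y Hxy c.
have := ad _ _ (c - x - y) Hxy.
have -> : x + (c - x - y) = c - y by rewrite addrA [x + _]addrC subrK.
have -> : y + (c - x - y) = c - x by rewrite addrC subrK.
done.
Qed.

Lemma ord_add2 (R : realType) (V : lmodType R) (le : V -> V -> Prop) :
  ordered_vs le -> forall a b c d, le a b -> le c d -> le (a + c) (b + d).
Proof.
move=> H a b c d H1 H2; case: (ord_props H) => _ _ t ad _.
apply: (t _ (b + c)); first exact: ad.
rewrite ![b + _]addrC; exact: ad.
Qed.

Lemma ord_sub0 (R : realType) (V : lmodType R) (le : V -> V -> Prop) :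
  ordered_vs le -> forall x y, le x y -> le 0 (y - x).
Proof.
move=> H x y Hxy; case: (ord_props H) => _ _ _ ad _.
by have := ad _ _ (- x) Hxy; rewrite subrr.
Qed.

Lemma ord_sub0' (R : realType) (V : lmodType R) (le : V -> V -> Prop) :
  ordered_vs le -> forall x y, le 0 (y - x) -> le x y.
Proof.
move=> H x y Hxy; case: (ord_props H) => _ _ _ ad _.
by have := ad _ _ x Hxy; rewrite add0r subrK.
Qed.

Section S. End S.
Lemma mlower_shift (R : realType) (V : lmodType R) (M : mixed_lattice_vs V) x y w z :
  is_mlower (ile M) (sle M) x y w -> is_mlower (ile M) (sle M) (x + z) (y + z) (w + z).
Proof.
case: (ord_props (ile_ordered M)) => _ _ _ iad _.
case: (ord_props (sle_ordered M)) => _ _ _ sad _.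
case=> H1 H2 H3; split; [exact: sad | exact: iad |].
move=> t Ht1 Ht2.
have := H3 (t - z).
rewrite -(addrK z x) -(addrK z y) => /(_ (sad _ _ _ Ht1) (iad _ _ _ Ht2)).
by move/(iad _ _ z); rewrite subrK.
Qed.

Lemma mlower_uniq (R : realType) (V : lmodType R) (M : mixed_lattice_vs V) x y w w' :
  is_mlower (ile M) (sle M) x y w -> is_mlower (ile M) (sle M) x y w' -> w = w'.
Proof.
case: (ord_props (ile_ordered M)) => _ ia _ _ _.
case=> H1 H2 H3 [H1' H2' H3']; apply: ia; [exact: H3' | exact: H3].
Qed.

Lemma mupper_mlower (R : realType) (V : lmodType R) (M : mixed_lattice_vs V) x y u :
  is_mupper (ile M) (sle M) x y u -> is_mlower (ile M) (sle M) y x (x + y - u).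
Proof.
case: (ord_props (ile_ordered M)) => _ _ _ _ ineg.
case: (ord_props (sle_ordered M)) => _ _ _ _ sneg.
case=> H1 H2 H3; split.
- have := sneg _ _ H1 (x + y).
  by have -> : x + y - x = y by rewrite [x + y]addrC addrK.
- by have := ineg _ _ H2 (x + y); rewrite addrK.
- move=> t Ht1 Ht2.
  have h1 := sneg _ _ Ht1 (x + y); rewrite addrK in h1.
  have h2 := ineg _ _ Ht2 (x + y); rewrite [x + y]addrC addrK in h2.
  rewrite [y + x]addrC in h2.
  have := ineg _ _ (H3 _ h1 h2) (x + y).
  by rewrite opprB addrC subrK.
Qed.

Lemma sle_ile (R : realType) (V : lmodType R) (M : mixed_lattice_vs V) :
  quasi_regular M -> forall x y, sle M x y -> ile M x y.
Proof.
move=> [Hq _] x y Hxy.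
have Hs := ord_sub0 (sle_ordered M) Hxy.
apply: (ord_sub0' (ile_ordered M)).
case: (mlower_ex M 0 (y - x)) => w Hw.
have Hw0 : Vsp M w.
  apply: (Hq 0 (y - x) w _ Hs Hw).
  by case: (ord_props (sle_ordered M)) => r _ _ _ _; apply: r.
case: (ord_props (sle_ordered M)) => _ sa _ _ _.
case: (ord_props (ile_ordered M)) => _ _ it _ _.
case: Hw => Hw1 Hw2 _.
by have <- : w = 0 by apply: sa.
Qed.

Lemma ile_pos (R : realType) (V : lmodType R) (M : mixed_lattice_vs V) :
  quasi_regular M -> forall x a, sle M 0 a -> ile M (x - a) x.
Proof.
move=> Hq x a Ha; have := sle_ile Hq Ha.
case: (ord_props (ile_ordered M)) => _ _ _ _ ineg.
by move/(ineg _ _)/(_ x); rewrite subr0.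
Qed.

Lemma lin_opp (R : realType) (V : lmodType R) (S : V -> Prop) :
  linear_subspace S -> forall x, S x -> S (- x).
Proof. by case=> _ _ sc x Hx; rewrite -scaleN1r; apply: sc. Qed.

Lemma lin_sub (R : realType) (V : lmodType R) (S : V -> Prop) :
  linear_subspace S -> forall x y, S x -> S y -> S (x - y).
Proof. move=> H x y Hx Hy; case: (H) => _ ad _; apply: ad => //; exact: lin_opp. Qed.

Lemma lin_shift (R : realType) (V : lmodType R) (S : V -> Prop) :
  linear_subspace S -> forall x z, S z -> S (x + z) -> S x.
Proof. move=> H x z Hz Hxz; by have := lin_sub H Hxz Hz; rewrite addrK. Qed.

Lemma vsp_add (R : realType) (V : lmodType R) (M : mixed_lattice_vs V) a b :
  Vsp M a -> Vsp M b -> Vsp M (a + b).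
Proof. by move=> Ha Hb; have := ord_add2 (sle_ordered M) Ha Hb; rewrite addr0. Qed.

Lemma reg_intro (R : realType) (V : lmodType R) (M : mixed_lattice_vs V) (S : V -> Prop) :
  linear_subspace S ->
  (forall x, S x -> exists a b, [/\ S a, Vsp M a, S b, Vsp M b & x = a - b]) ->
  regular M S.
Proof.
move=> HL H x; split; first exact: H.
by case=> a [b [Sa _ Sb _ ->]]; apply: lin_sub.
Qed.

Lemma riesz (R : realType) (V : lmodType R) (M : mixed_lattice_vs V) :
  quasi_regular M -> forall x y z, Vsp M x -> Vsp M y -> Vsp M z ->
  ile M x (y + z) ->
  exists x1 x2, [/\ x = x1 + x2, Vsp M x1, ile M x1 y & ile M x1 x] /\
                [/\ Vsp M x2, ile M x2 z & ile M x2 x].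
Proof.
move=> Hq x y z Hx Hy Hz Hxyz.
case: (mlower_ex M x y) => w Hw.
have Hw0 : Vsp M w by apply: (Hq.1 x y w).
case: (Hw) => Hw1 Hw2 Hw3.
case: (ord_props (ile_ordered M)) => _ _ it iad ineg.
exists w, (x - w); split; split.
- by rewrite addrC subrK.
- done.
- done.
- exact: sle_ile Hw1.
- exact: (ord_sub0 (sle_ordered M)).
- have h1 : sle M (x - z) x.
    by apply: (ord_sub0' (sle_ordered M)); rewrite opprB addrC subrK.
  have h2 : ile M (x - z) y by have := iad _ _ (- z) Hxyz; rewrite addrK.
  have := ineg _ _ (Hw3 _ h1 h2) x.
  by have -> : x - (x - z) = z by rewrite opprB addrC subrK.
- exact: ile_pos.
Qed.

Lemma make_rqi (R : realType) (V : lmodType R) (M : mixed_lattice_vs V) (S : V -> Prop) :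
  quasi_regular M -> linear_subspace S -> regular M S ->
  (forall x y, S y -> sle M 0 x -> ile M x y -> S x) ->
  regular_quasi_ideal M S.
Proof.
move=> Hq HL Hr Hs.
have Hlow : forall x y w, S x -> S y -> is_mlower (ile M) (sle M) x y w -> S w.
  move=> x y w Sx Sy Hw.
  move: Hw; case/Hr: Sx => p [q [Sp Vp Sq Vq ->]].
  case/Hr: Sy => p' [q' [Sp' Vp' Sq' Vq' ->]] Hw.
  have Sz : S (q + q') by case: HL => _ ad _; apply: ad.
  have Hw' := mlower_shift (q + q') Hw.
  have E1 : p - q + (q + q') = p + q' by rewrite addrA subrK.
  have E2 : p' - q' + (q + q') = p' + q by rewrite [q + q']addrC addrA subrK.
  rewrite E1 E2 in Hw'.
  have Vw : Vsp M (w + (q + q')).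
    by apply: (Hq.1 _ _ _ _ _ Hw'); apply: vsp_add.
  apply: (lin_shift HL Sz).
  apply: (Hs _ (p' + q)) => //.
    by case: HL => _ ad _; apply: ad.
  by case: Hw'.
split=> //; split; first (split=> //; split).
- exact: Hlow.
- move=> x y u Sx Sy Hu.
  have Hm := mupper_mlower Hu.
  have Sm := Hlow _ _ _ Sy Sx Hm.
  have -> : u = x + y - (x + y - u) by rewrite opprB addrC subrK.
  apply: lin_sub => //; by case: HL => _ ad _; apply: ad.
- exact: Hs.
Qed.

Lemma rqi_lin (R : realType) (V : lmodType R) (M : mixed_lattice_vs V) A :
  regular_quasi_ideal M A -> linear_subspace A.
Proof. by case=> [[[]]]. Qed.

Lemma rqi_solid (R : realType) (V : lmodType R) (M : mixed_lattice_vs V) A :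
  regular_quasi_ideal M A -> forall x y, A y -> sle M 0 x -> ile M x y -> A x.
Proof. by case=> [[_ H] _]. Qed.

Lemma rqi_reg (R : realType) (V : lmodType R) (M : mixed_lattice_vs V) A :
  regular_quasi_ideal M A -> forall x, A x -> exists a b, [/\ A a, Vsp M a, A b, Vsp M b & x = a - b].
Proof. by case=> _ H x /H. Qed.

Lemma lin_sum (R : realType) (V : lmodType R) (A B : V -> Prop) :
  linear_subspace A -> linear_subspace B -> linear_subspace (set_sum A B).
Proof.
case=> A0 Aad Asc [B0 Bad Bsc]; split.
- by exists 0, 0; rewrite addr0.
- move=> x y [a [b [Aa Bb ->]]] [a' [b' [Aa' Bb' ->]]].
  by exists (a + a'), (b + b'); split; [apply: Aad|apply: Bad|rewrite addrACA].
- move=> c x [a [b [Aa Bb ->]]].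
  by exists (c *: a), (c *: b); split; [apply: Asc|apply: Bsc|rewrite scalerDr].
Qed.

Lemma lin_cap (R : realType) (V : lmodType R) (A B : V -> Prop) :
  linear_subspace A -> linear_subspace B -> linear_subspace (set_cap A B).
Proof.
case=> A0 Aad Asc [B0 Bad Bsc]; split.
- by split.
- by move=> x y [? ?] [? ?]; split; [apply: Aad|apply: Bad].
- by move=> c x [? ?]; split; [apply: Asc|apply: Bsc].
Qed.

Lemma sum_rqi (R : realType) (V : lmodType R) (M : mixed_lattice_vs V) A B :
  quasi_regular M -> regular_quasi_ideal M A -> regular_quasi_ideal M B ->
  regular_quasi_ideal M (set_sum A B).
Proof.
move=> Hq HA HB.
have HL := lin_sum (rqi_lin HA) (rqi_lin HB).
apply: make_rqi => //.
- apply: reg_intro => // x [a [b [Aa Bb ->]]].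
  case: (rqi_reg HA Aa) => a1 [a2 [Aa1 Va1 Aa2 Va2 ->]].
  case: (rqi_reg HB Bb) => b1 [b2 [Bb1 Vb1 Bb2 Vb2 ->]].
  exists (a1 + b1), (a2 + b2); split.
  + by exists a1, b1.
  + exact: vsp_add.
  + by exists a2, b2.
  + exact: vsp_add.
  + by rewrite opprD addrACA.
- move=> x y [a [b [Aa Bb ->]]] Vx Hxy.
  move: Hxy.
  case: (rqi_reg HA Aa) => a1 [a2 [Aa1 Va1 Aa2 Va2 ->]].
  case: (rqi_reg HB Bb) => b1 [b2 [Bb1 Vb1 Bb2 Vb2 ->]] Hxy.
  have Hle : ile M x (a1 + b1).
    case: (ord_props (ile_ordered M)) => _ _ it _ _.
    apply: (it _ _ _ Hxy); apply: (ord_add2 (ile_ordered M)); exact: ile_pos.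
  have Va : Vsp M a1 := Va1.
  case: (riesz Hq Vx Va1 Vb1 Hle) => x1 [x2 [[-> V1 H1 _] [V2 H2 _]]].
  exists x1, x2; split => //.
  + exact: (rqi_solid HA Aa1).
  + exact: (rqi_solid HB Bb1).
Qed.

Lemma cap_rqi (R : realType) (V : lmodType R) (M : mixed_lattice_vs V) A B :
  quasi_regular M -> regular_quasi_ideal M A -> regular_quasi_ideal M B ->
  regular_quasi_ideal M (set_cap A B).
Proof.
move=> Hq HA HB.
have HL := lin_cap (rqi_lin HA) (rqi_lin HB).
apply: make_rqi => //.
- apply: reg_intro => // x [Ax Bx].
  case: (rqi_reg HA Ax) => a1 [a2 [Aa1 Va1 Aa2 Va2 Ex]].
  case: (rqi_reg HB Bx) => b1 [b2 [Bb1 Vb1 Bb2 Vb2 Ex']].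
  case: (mlower_ex M a1 b1) => p Hp.
  case: (mlower_ex M a2 b2) => q Hq'.
  have Vp : Vsp M p by apply: (Hq.1 a1 b1).
  have Vq : Vsp M q by apply: (Hq.1 a2 b2).
  have Hs := mlower_shift x Hq'.
  have E1 : a2 + x = a1 by rewrite Ex addrC subrK.
  have E2 : b2 + x = b1 by rewrite Ex' addrC subrK.
  rewrite E1 E2 in Hs.
  have Ep := mlower_uniq Hp Hs.
  case: Hp => Hp1 Hp2 _; case: Hq' => Hq1 Hq2 _.
  exists p, q; split => //.
  + split; [apply: (rqi_solid HA Aa1) => //; exact: sle_ile Hp1
           |exact: (rqi_solid HB Bb1)].
  + split; [apply: (rqi_solid HA Aa2) => //; exact: sle_ile Hq1
           |exact: (rqi_solid HB Bb2)].
  + by rewrite Ep addrC addKr.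
- move=> x y [Ay By] Vx Hxy; split.
  + exact: (rqi_solid HA Ay).
  + exact: (rqi_solid HB By).
Qed.

Lemma zero_rqi (R : realType) (V : lmodType R) (M : mixed_lattice_vs V) :
  quasi_regular M -> regular_quasi_ideal M set_zero.
Proof.
move=> Hq.
have HL : linear_subspace (@set_zero R V).
  by split; rewrite /set_zero //; [move=> x y -> ->; rewrite addr0 | move=> a x ->; rewrite scaler0].
case: (ord_props (sle_ordered M)) => sr _ _ _ _.
case: (ord_props (ile_ordered M)) => _ ia _ _ _.
apply: make_rqi => //.
- apply: reg_intro => // x ->; exists 0, 0; split => //; try exact: sr; by rewrite subr0.
- move=> x y -> Vx Hx; rewrite /set_zero; apply: ia => //; exact: sle_ile.
Qed.

Lemma diff_rqi (R : realType) (V : lmodType R) (M : mixed_lattice_vs V) :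
  quasi_regular M -> regular_quasi_ideal M (Vsp_diff M).
Proof.
move=> Hq.
case: (ord_props (sle_ordered M)) => sr _ _ _ _.
case: (sle_ordered M) => _ _ _ _ ssc.
have HL : linear_subspace (Vsp_diff M).
  split.
  - by exists 0, 0; split => //; try exact: sr; rewrite subr0.
  - move=> x y [a [b [Va Vb ->]]] [a' [b' [Va' Vb' ->]]].
    exists (a + a'), (b + b'); split; try exact: vsp_add.
    by rewrite opprD addrACA.
  - move=> c x [a [b [Va Vb ->]]].
    case: (lerP 0 c) => Hc.
    + exists (c *: a), (c *: b); split; last by rewrite scalerBr.
      * by have := ssc c _ _ Hc Va; rewrite scaler0.
      * by have := ssc c _ _ Hc Vb; rewrite scaler0.
    + have Hc' : 0 <= - c by rewrite oppr_ge0 ltW.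
      exists ((- c) *: b), ((- c) *: a); split.
      * by have := ssc _ _ _ Hc' Vb; rewrite scaler0.
      * by have := ssc _ _ _ Hc' Va; rewrite scaler0.
      * by rewrite !scaleNr opprK scalerBr addrC.
apply: make_rqi => //.
- apply: reg_intro => // x [a [b [Va Vb ->]]].
  exists a, b; split => //; [exists a, 0|exists b, 0]; split => //; try exact: sr; by rewrite subr0.
- by move=> x y _ Vx _; exists x, 0; split => //; try exact: sr; rewrite subr0.
Qed.

Theorem theorem4p18 (R : realType) (V : lmodType R) (M : mixed_lattice_vs V)
  (HqM : quasi_regular M) :
  (* A + B and A ∩ B are in R(V) and are the join and meet w.r.t. inclusion *)
  (forall A B, regular_quasi_ideal M A -> regular_quasi_ideal M B ->
     ([/\ regular_quasi_ideal M (set_sum A B),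
          set_incl A (set_sum A B), set_incl B (set_sum A B) &
          (forall C, regular_quasi_ideal M C -> set_incl A C -> set_incl B C ->
             set_incl (set_sum A B) C)] /\
      [/\ regular_quasi_ideal M (set_cap A B),
          set_incl (set_cap A B) A, set_incl (set_cap A B) B &
          (forall C, regular_quasi_ideal M C -> set_incl C A -> set_incl C B ->
             set_incl C (set_cap A B))])) /\
  (* distributivity *)
  (forall A B C, regular_quasi_ideal M A -> regular_quasi_ideal M B ->
     regular_quasi_ideal M C ->
     set_eq (set_cap A (set_sum B C)) (set_sum (set_cap A B) (set_cap A C))) /\
  (* smallest element {0} *)
  (regular_quasi_ideal M set_zero /\
   forall A, regular_quasi_ideal M A -> set_incl set_zero A) /\
  (* largest element V_sp - V_sp *)
  (regular_quasi_ideal M (Vsp_diff M) /\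
   forall A, regular_quasi_ideal M A -> set_incl A (Vsp_diff M)).
Proof.
split; [|split; [|split]].
- move=> A B HA HB; split; split.
  + exact: sum_rqi.
  + move=> x Ax; exists x, 0; split => //; last by rewrite addr0.
    by case: (rqi_lin HB).
  + move=> x Bx; exists 0, x; split => //; last by rewrite add0r.
    by case: (rqi_lin HA).
  + move=> C HC HAC HBC x [a [b [Aa Bb ->]]].
    by case: (rqi_lin HC) => _ ad _; apply: ad; [apply: HAC|apply: HBC].
  + exact: cap_rqi.
  + by move=> x [].
  + by move=> x [].
  + by move=> C _ H1 H2 x Cx; split; [apply: H1|apply: H2].
- move=> A B C HA HB HC x; split.
  + have HBC := sum_rqi HqM HB HC.
    have HI := cap_rqi HqM HA HBC.
    have HL := lin_sum (lin_cap (rqi_lin HA) (rqi_lin HB)) (lin_cap (rqi_lin HA) (rqi_lin HC)).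
    have Hpos : forall p, A p -> set_sum B C p -> Vsp M p ->
        set_sum (set_cap A B) (set_cap A C) p.
      move=> p Ap [b [c [Bb Cc Ep]]] Vp.
      move: Ep.
      case: (rqi_reg HB Bb) => b1 [b2 [Bb1 Vb1 Bb2 Vb2 ->]].
      case: (rqi_reg HC Cc) => c1 [c2 [Cc1 Vc1 Cc2 Vc2 ->]] Ep.
      have Hle : ile M p (b1 + c1).
        case: (ord_props (ile_ordered M)) => r _ it _ _.
        rewrite Ep; apply: (ord_add2 (ile_ordered M)); exact: ile_pos.
      case: (riesz HqM Vp Vb1 Vc1 Hle) => x1 [x2 [[Ex V1 H1 H1'] [V2 H2 H2']]].
      exists x1, x2; split => //; split.
      * exact: (rqi_solid HA Ap).
      * exact: (rqi_solid HB Bb1).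
      * exact: (rqi_solid HA Ap).
      * exact: (rqi_solid HC Cc1).
    move=> Hx; case: (rqi_reg HI Hx) => p [q [[Ap Sp] Vp [Aq Sq] Vq ->]].
    by apply: lin_sub => //; apply: Hpos.
  + move=> [u [v [[Au Bu] [Av Cv] ->]]]; split.
    * by case: (rqi_lin HA) => _ ad _; apply: ad.
    * by exists u, v.
- split; first exact: zero_rqi.
  by move=> A HA x ->; case: (rqi_lin HA).
- split; first exact: diff_rqi.
  by move=> A HA x /(rqi_reg HA) [a [b [_ Va _ Vb ->]]]; exists a, b.
Qed.
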